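(* Let $M$ be a centrally endo-AIP, semi-projective, retractable right $R$-module with finite uniform dimension. Then $S=\mathrm{End}_R(M)$ is a quasi-Baer ring.
   Context: For $N\le M$, $l_S(N)=\{\phi\in S:\phi(N)=0\}$. An ideal $I$ of $S$ is centrally s-unital if for every $a\in I$ there is $z\in I$ central in $S$ with $az=a$. $M$ is centrally endo-AIP if $l_S(N)$ is a centrally s-unital ideal of $S$ for every fully invariant submodule $N$ of $M$. $M$ is semi-projective if $T=\mathrm{Hom}_R(M,TM)$ for every cyclic right ideal $T$ of $S$. $M$ is retractable if $\mathrm{Hom}_R(M,N)\neq 0$ for every nonzero submodule $N$ of $M$. $M$ has finite uniform dimension if it has an essential submodule that is a finite direct sum of uniform submodules. A ring is quasi-Baer if the right annihilator of every ideal is generated, as a right ideal, by an idempotent. *)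

(* Defs.v *)
From HB Require Import structures.
From mathcomp Require Import all_boot all_order all_algebra.
Set Implicit Arguments. Unset Strict Implicit. Unset Printing Implicit Defensive.
Import GRing.Theory.
Local Open Scope ring_scope.

(* Right R-modules are represented as left modules over the converse ring R^c:
   for M : lmodType R^c, the right action m.r is written r *: m.
   Subsets of M are Prop-valued predicates M -> Prop; elements of
   S = End_R(M) are functions M -> M satisfying [endo]; the product in S is
   composition (f * g = f \o g), acting on the left of M. *)

Section ModuleDefs.
Variables (R : pzRingType) (M : lmodType R^c).

Definition endo (f : M -> M) : Prop :=
  forall (a : R^c) (x y : M), f (a *: x + y) = a *: f x + f y.

Definition submodule (N : M -> Prop) : Prop :=
  [/\ N 0, (forall x y, N x -> N y -> N (x + y))
    & (forall (a : R^c) x, N x -> N (a *: x))].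

Definition nonzero_sub (N : M -> Prop) : Prop := exists x, N x /\ x <> 0.

Definition fully_invariant (N : M -> Prop) : Prop :=
  submodule N /\ forall f, endo f -> forall x, N x -> N (f x).

Definition lS (N : M -> Prop) : (M -> M) -> Prop :=
  fun f => endo f /\ forall x, N x -> f x = 0.

Definition central_in_S (z : M -> M) : Prop :=
  endo z /\ forall f, endo f -> forall x, f (z x) = z (f x).

Definition ideal_S (I : (M -> M) -> Prop) : Prop :=
  (forall f g, I f -> (forall x, f x = g x) -> I g) /\
  [/\ (forall f, I f -> endo f),
      I (fun _ => 0),
      (forall f g, I f -> I g -> I (fun x => f x + g x)),
      (forall f g, I f -> endo g -> I (fun x => g (f x)))
    & (forall f g, I f -> endo g -> I (fun x => f (g x)))].

(* Ideals are sets of functions; two functions that agree pointwise are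
   the same element of S, so membership is taken up to pointwise equality. *)
Definition centrally_s_unital (I : (M -> M) -> Prop) : Prop :=
  ideal_S I /\
  forall a, I a -> exists z, [/\ I z, central_in_S z & forall x, a (z x) = a x].

Definition centrally_endo_AIP : Prop :=
  forall N, fully_invariant N -> centrally_s_unital (lS N).

Definition TM (T : (M -> M) -> Prop) : M -> Prop :=
  fun m => forall N, submodule N -> (forall t x, T t -> N (t x)) -> N m.

Definition cyclic_right_ideal (phi : M -> M) : (M -> M) -> Prop :=
  fun f => exists s, endo s /\ forall x, f x = phi (s x).

Definition HomM (N : M -> Prop) : (M -> M) -> Prop :=
  fun f => endo f /\ forall x, N (f x).

Definition semi_projective : Prop :=
  forall phi, endo phi ->
    forall f, endo f ->
      (cyclic_right_ideal phi f <-> HomM (TM (cyclic_right_ideal phi)) f).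

Definition retractable : Prop :=
  forall N, submodule N -> nonzero_sub N ->
    exists f, HomM N f /\ exists x, f x <> 0.

Definition essential (E : M -> Prop) : Prop :=
  submodule E /\
  forall N, submodule N -> nonzero_sub N -> exists x, [/\ N x, E x & x <> 0].

Definition uniform (U : M -> Prop) : Prop :=
  [/\ submodule U, nonzero_sub U &
    forall N1 N2, submodule N1 -> submodule N2 ->
      (forall x, N1 x -> U x) -> (forall x, N2 x -> U x) ->
      nonzero_sub N1 -> nonzero_sub N2 -> exists x, [/\ N1 x, N2 x & x <> 0]].

Definition direct_sum_of (n : nat) (U : 'I_n -> M -> Prop) (E : M -> Prop) :=
  (forall x, E x <-> exists xs : 'I_n -> M,
        (forall i, U i (xs i)) /\ x = \sum_(i < n) xs i) /\
  (forall xs : 'I_n -> M, (forall i, U i (xs i)) ->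
        \sum_(i < n) xs i = 0 -> forall i, xs i = 0).

Definition finite_uniform_dimension : Prop :=
  exists E, essential E /\
    exists (n : nat) (U : 'I_n -> M -> Prop),
      (forall i, uniform (U i)) /\ direct_sum_of U E.

End ModuleDefs.

Definition quasi_Baer_End (R : pzRingType) (M : lmodType R^c) : Prop :=
  forall I : (M -> M) -> Prop, ideal_S I ->
    exists e, [/\ endo e, (forall x, e (e x) = e x) &
      forall g, endo g ->
        ((forall f, I f -> forall x, f (g x) = 0) <->
         cyclic_right_ideal e g)].

(* Main.v *)
Require Import Defs.
From mathcomp Require Import all_boot all_order all_algebra.
From Stdlib Require Import Classical IndefiniteDescription.
From mathcomp Require Import zify.
Set Implicit Arguments. Unset Strict Implicit. Unset Printing Implicit Defensive.
Import GRing.Theory.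
Local Open Scope ring_scope.

Section Helpers.
Variables (R : pzRingType) (M : lmodType R^c).
Implicit Types (f g : M -> M) (x y : M) (N : M -> Prop).

Lemma endoD f : endo f -> forall x y, f (x + y) = f x + f y.
Proof. by move=> hf x y; rewrite -[x in LHS]scale1r hf scale1r. Qed.

Lemma endo0 f : endo f -> f 0 = 0.
Proof.
move=> hf; apply: (addrI (f 0)); by rewrite -endoD // !addr0.
Qed.

Lemma endoN f : endo f -> forall x, f (- x) = - f x.
Proof.
move=> hf x; apply: (addrI (f x)); by rewrite -endoD // !subrr endo0.
Qed.

Lemma endoB f : endo f -> forall x y, f (x - y) = f x - f y.
Proof. by move=> hf x y; rewrite endoD // endoN. Qed.

Lemma endoZ f : endo f -> forall (a : R^c) x, f (a *: x) = a *: f x.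
Proof. by move=> hf a x; rewrite -[a *: x]addr0 hf endo0 // addr0. Qed.

Lemma endo_sum f : endo f -> forall (s : seq nat) (F : nat -> M),
  f (\sum_(l <- s) F l) = \sum_(l <- s) f (F l).
Proof.
move=> hf s F; elim: s => [|a s IH]; first by rewrite !big_nil endo0.
by rewrite !big_cons endoD // IH.
Qed.

Lemma endo_comp f g : endo f -> endo g -> endo (fun x => f (g x)).
Proof. by move=> hf hg a x y; rewrite hg hf. Qed.

Lemma endo_add f g : endo f -> endo g -> endo (fun x => f x + g x).
Proof.
by move=> hf hg a x y; rewrite hf hg scalerDr addrACA.
Qed.

Lemma endo_opp f : endo f -> endo (fun x => - f x).
Proof. by move=> hf a x y; rewrite hf opprD scalerN. Qed.

Lemma endo_id : endo (fun x : M => x).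
Proof. by []. Qed.

Lemma sub0 N : submodule N -> N 0.
Proof. by case. Qed.
Lemma subD N : submodule N -> forall x y, N x -> N y -> N (x + y).
Proof. by case. Qed.
Lemma subZ N : submodule N -> forall (a : R^c) x, N x -> N (a *: x).
Proof. by case. Qed.
Lemma subN N : submodule N -> forall x, N x -> N (- x).
Proof. by move=> hN x Nx; rewrite -scaleN1r; apply: subZ. Qed.
Lemma subB N : submodule N -> forall x y, N x -> N y -> N (x - y).
Proof. by move=> hN x y Nx Ny; apply: subD => //; apply: subN. Qed.
Lemma sub_sum N : submodule N -> forall (s : seq nat) (F : nat -> M),
  (forall l, l \in s -> N (F l)) -> N (\sum_(l <- s) F l).
Proof.
move=> hN s F; elim: s => [|a s IH] H; first by rewrite big_nil; apply: sub0.
rewrite big_cons; apply: subD => //; first by apply: H; rewrite inE eqxx.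
by apply: IH => l ls; apply: H; rewrite inE ls orbT.
Qed.

Definition sumP (F : nat -> M -> Prop) (s : seq nat) (P : pred nat) (x : M) :=
  exists xs : nat -> M, [/\ forall l, l \in s -> F l (xs l),
     forall l, l \in s -> ~~ P l -> xs l = 0 & x = \sum_(l <- s) xs l].

Definition indep (F : nat -> M -> Prop) (s : seq nat) :=
  forall xs : nat -> M, (forall l, l \in s -> F l (xs l)) ->
    \sum_(l <- s) xs l = 0 -> forall l, l \in s -> xs l = 0.

Definition subs (F : nat -> M -> Prop) (s : seq nat) :=
  forall l, l \in s -> submodule (F l).

Lemma sumP_sub F s P : subs F s -> submodule (sumP F s P).
Proof.
move=> hF; split.
- exists (fun _ => 0); split => //; last by rewrite big1.
  by move=> l ls; apply: sub0; apply: hF.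
- move=> x y [xs [h1 h2 ->]] [ys [k1 k2 ->]].
  exists (fun l => xs l + ys l); split.
  + by move=> l ls; apply: subD; [apply: hF| apply: h1| apply: k1].
  + by move=> l ls Pl; rewrite h2 // k2 // addr0.
  + by rewrite big_split.
- move=> a x [xs [h1 h2 ->]]; exists (fun l => a *: xs l); split.
  + by move=> l ls; apply: subZ; [apply: hF| apply: h1].
  + by move=> l ls Pl; rewrite h2 // scaler0.
  + by rewrite scaler_sumr.
Qed.

Lemma sumP_inter F s P Q x : indep F s -> subs F s ->
  sumP F s P x -> sumP F s Q x -> sumP F s (predI P Q) x.
Proof.
move=> hi hF [xs [h1 h2 ex]] [ys [k1 k2 ey]].
have eq : forall l, l \in s -> xs l = ys l.
  move=> l ls; apply/eqP; rewrite -subr_eq0; apply/eqP.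
  apply: (hi (fun l => xs l - ys l)) => //.
    by move=> k ks; apply: subB; [apply: hF| apply: h1| apply: k1].
  by rewrite sumrB -ex -ey subrr.
exists xs; split => // l ls /=; rewrite negb_and => /orP [nP|nQ].
  by apply: h2.
by rewrite eq // k2.
Qed.

Lemma sumP_none F s P x : (forall l, l \in s -> ~~ P l) -> sumP F s P x -> x = 0.
Proof.
move=> H [xs [h1 h2 ->]]; apply: big1_seq => l /andP [_ ls].
by apply: h2 => //; apply: H.
Qed.

Lemma sumP_ext F s P Q x : {in s, P =1 Q} -> sumP F s P x -> sumP F s Q x.
Proof.
move=> H [xs [h1 h2 ex]]; exists xs; split => // l ls; rewrite -H //; exact: h2.
Qed.

Lemma sum_single (s : seq nat) l (x : M) : uniq s -> l \in s ->
  \sum_(k <- s) (if k == l then x else 0) = x.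
Proof.
move=> us ls; rewrite (bigD1_seq l) //= eqxx big1 ?addr0 //.
by move=> k /negbTE ->.
Qed.

Lemma sumP_single F s (P : pred nat) l x : uniq s -> subs F s -> l \in s -> P l -> F l x ->
  sumP F s P x.
Proof.
move=> us hF ls Pl Fx; exists (fun k => if k == l then x else 0); split.
- by move=> k ks; case: eqP => [->//|_]; apply: sub0; apply: hF.
- by move=> k ks; case: eqP => [->|//]; rewrite Pl.
- by rewrite sum_single.
Qed.

Lemma sum_rem (s : seq nat) j (F : nat -> M) : uniq s ->
  \sum_(l <- rem j s) F l = \sum_(l <- s) (if l != j then F l else 0).
Proof. by move=> us; rewrite rem_filter // big_filter big_mkcond. Qed.


Lemma sumP_nil F P x : sumP F [::] P x -> x = 0.
Proof. by case=> xs [_ _ ->]; rewrite big_nil. Qed.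

Lemma indep_rem F s j : uniq s -> subs F s -> indep F s -> indep F (rem j s).
Proof.
move=> us hF hi xs h1 h0 l ls.
have [lj ls'] : l != j /\ l \in s by move: ls; rewrite mem_rem_uniq // inE => /andP.
pose ys k := if k != j then xs k else 0.
suff : ys l = 0 by rewrite /ys lj.
apply: hi => //; last by rewrite -sum_rem.
move=> k ks; rewrite /ys; case: ifP => kj.
  by apply: h1; rewrite mem_rem_uniq // inE kj.
by apply: sub0; apply: hF.
Qed.

Lemma caseB (U0 : M -> Prop) V s : uniq s -> subs V s -> indep V s -> uniform U0 ->
  (forall j, j \in s -> exists x, [/\ U0 x, sumP V s (predC1 j) x & x <> 0]) ->
  s = [::].
Proof.
move=> us hV hi [hU _ Hu] H.
have sN : forall P, submodule (fun z => U0 z /\ sumP V s P z).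
  move=> P; have [a1 a2 a3] := sumP_sub P hV; case: hU => b1 b2 b3.
  split; first by split.
    by move=> ? ? [? ?] [? ?]; split; auto.
  by move=> ? ? [? ?]; split; auto.
have claim : forall t, all (mem s) t -> t <> [::] ->
   exists x, [/\ U0 x, sumP V s (fun l => l \notin t) x & x <> 0].
  elim=> [//|j t IH] /andP [js ts] _.
  have [x [Ux Sx nx]] := H j js.
  case: t IH ts => [|k t] IH ts.
    exists x; split => //; apply: sumP_ext Sx => l _ /=; by rewrite inE.
  have [y [Uy Sy ny]] := IH ts (fun e => ltac:(discriminate)).
  have [z [[Uz Sz1] [_ Sz2] nz]] := Hu _ _ (sN (predC1 j)) (sN (fun l => l \notin k :: t))
     (fun _ h => proj1 h) (fun _ h => proj1 h)
     (ex_intro _ x (conj (conj Ux Sx) nx)) (ex_intro _ y (conj (conj Uy Sy) ny)).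
  exists z; split => //.
  apply: sumP_ext (sumP_inter hi hV Sz1 Sz2) => l _ /=.
  by rewrite [in RHS]inE negb_or.
clear sN; case: s us hV hi H claim => [//|j s] us hV hi H claim.
have [x [_ Sx nx]] := claim (j :: s) (introT allP (fun l ls => ls)) ltac:(discriminate).
case: nx; apply: sumP_none Sx => l ls; by rewrite negbK.
Qed.

Lemma UD (U : nat -> M -> Prop) (r : seq nat) : uniq r ->
  (forall k, k \in r -> uniform (U k)) -> indep U r ->
  forall (V : nat -> M -> Prop) (s : seq nat), uniq s -> subs V s ->
  (forall l, l \in s -> nonzero_sub (V l)) -> indep V s ->
  (forall l, l \in s -> forall x, V l x -> sumP U r predT x) -> (size s <= size r)%N.
Proof.
elim: r => [|a r IH] ur hU hiU V s us hV hnz hiV hsub.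
  case: s us hV hnz hiV hsub => [//|l s] _ _ hnz _ hsub.
  have [x [Vx nx]] := hnz l (mem_head _ _).
  by case: nx; apply: sumP_nil (hsub l (mem_head _ _) x Vx).
move: ur => /andP [ar ur].
have hUa : uniform (U a) := hU a (mem_head _ _).
have hUr : forall k, k \in r -> uniform (U k).
  by move=> k kr; apply: hU; rewrite inE kr orbT.
have subU : subs U (a :: r) by move=> k kr; case: (hU k kr).
have subUr : subs U r by move=> k kr; apply: subU; rewrite inE kr orbT.
have sUa : submodule (U a) by case: hUa.
have dec : forall x, sumP U (a :: r) predT x ->
    exists c u, [/\ sumP U r predT c, U a u & x = u + c].
  move=> x [xs [h1 _ ->]]; exists (\sum_(l <- r) xs l), (xs a); split.
  - exists xs; split => // l lr; apply: h1; by rewrite inE lr orbT.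
  - by apply: h1; rewrite mem_head.
  - by rewrite big_cons.
have CU : forall c, sumP U r predT c -> U a c -> c = 0.
  move=> c [xs [h1 _ ec]] Uc.
  pose zs k := if k == a then - c else xs k.
  suff : zs a = 0 by rewrite /zs eqxx => /eqP; rewrite oppr_eq0 => /eqP.
  apply: hiU; last by rewrite mem_head.
    move=> k; rewrite inE => /orP [/eqP ->|kr]; rewrite /zs ?eqxx.
      by apply: subN.
    have ka : k != a by apply: contraNneq ar => <-.
    by rewrite (negbTE ka); apply: h1.
  rewrite big_cons.
  have -> : \sum_(k <- r) zs k = \sum_(k <- r) xs k.
    apply: eq_big_seq => k kr; have ka : k != a by apply: contraNneq ar => <-.
    by rewrite /zs (negbTE ka).
  by rewrite /zs eqxx -ec addNr.
have hiUr : indep U r.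
  move=> xs h1 h0 l lr.
  pose ys k := if k == a then 0 else xs k.
  have la : l != a by apply: contraNneq ar => <-.
  suff : ys l = 0 by rewrite /ys (negbTE la).
  apply: hiU; last by rewrite inE lr orbT.
    move=> k; rewrite inE => /orP [/eqP ->|kr]; rewrite /ys ?eqxx.
      by apply: sub0.
    have ka : k != a by apply: contraNneq ar => <-.
    by rewrite (negbTE ka); apply: h1.
  rewrite big_cons.
  have -> : \sum_(k <- r) ys k = \sum_(k <- r) xs k.
    apply: eq_big_seq => k kr; have ka : k != a by apply: contraNneq ar => <-.
    by rewrite /ys (negbTE ka).
  by rewrite /ys eqxx add0r.
have [[j [js HA]] | nA] := classic (exists j, j \in s /\
     forall x, sumP V s (predC1 j) x -> U a x -> x = 0).
- pose C := sumP U r predT.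
  pose V' l x := C x /\ exists u, U a u /\ V l (x + u).
  have subC : submodule C := sumP_sub predT subUr.
  have memrem : forall l, l \in rem j s -> l != j /\ l \in s.
    by move=> l; rewrite mem_rem_uniq // inE => /andP.
  have hiV' : indep V (rem j s) by apply: indep_rem.
  have inS : forall l x, l \in rem j s -> V l x -> sumP V s (predC1 j) x.
    move=> l x /memrem [lj ls] Vx; exact: sumP_single us hV ls lj Vx.
  have sz : (0 < size s)%N by rewrite lt0n size_eq0; apply/eqP => s0; rewrite s0 in js.
  have -> : size s = (size (rem j s)).+1 by rewrite size_rem // prednK.
  rewrite /= ltnS; apply: (IH ur hUr hiUr V' (rem j s)).
  + exact: rem_uniq.
  + move=> l /memrem [_ ls]; have hVl := hV l ls; split.
    * split; first exact: sub0.
      by exists 0; split; [apply: sub0 | rewrite addr0; apply: sub0].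
    * move=> x y [Cx [u [Uu Vxu]]] [Cy [v [Uv Vyv]]]; split; first exact: subD.
      exists (u + v); split; first exact: subD.
      by rewrite addrACA; apply: subD.
    * move=> c x [Cx [u [Uu Vxu]]]; split; first exact: subZ.
      exists (c *: u); split; first exact: subZ.
      by rewrite -scalerDr; apply: subZ.
  + move=> l lr; have [_ ls] := memrem l lr.
    have [v [Vv nv]] := hnz l ls.
    have [c [u [Cc Uu ev]]] := dec v (hsub l ls v Vv).
    exists c; split.
      by split => //; exists u; split => //; rewrite addrC -ev.
    move=> c0; rewrite c0 addr0 in ev; apply: nv; apply: HA.
      exact: inS lr Vv.
    by rewrite ev.
  + move=> ys h1 h0 l ls.
    have : forall k, exists u, k \in rem j s -> U a u /\ V k (ys k + u).
      move=> k; case: (boolP (k \in rem j s)) => kin.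
        have [_ [u hu]] := h1 k kin; by exists u.
      by exists 0 => kk; case/negP: kin.
    case/functional_choice => us' hus.
    have tot : \sum_(k <- rem j s) (ys k + us' k) = 0.
      apply: HA.
        exists (fun k => if k != j then ys k + us' k else 0); split.
        - move=> k ks; case: ifP => kj.
            by apply: (hus k _).2; rewrite mem_rem_uniq // inE kj ks.
          by apply: sub0; apply: hV.
        - by move=> k ks; rewrite /= => /negbTE ->.
        - by rewrite sum_rem.
      rewrite big_split /= h0 add0r; apply: sub_sum => // k kin.
      exact: (hus k kin).1.
    have := hiV' (fun k => ys k + us' k) (fun k kin => (hus k kin).2) tot l ls.
    move=> /eqP; rewrite addr_eq0 => /eqP eyl.
    apply: CU; first exact: (h1 l ls).1.
    by rewrite eyl; apply: subN => //; exact: (hus l ls).1.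
  + by move=> l ls x [Cx _].
- have H : forall j, j \in s -> exists x, [/\ U a x, sumP V s (predC1 j) x & x <> 0].
    move=> j js; apply: NNPP => Hn; apply: nA; exists j; split => // x Sx Ux.
    by apply: NNPP => nx; apply: Hn; exists x.
  by rewrite (caseB us hV hiV hUa H).
Qed.


Lemma lS_zero N : lS N (fun _ => 0).
Proof. by split=> // a x y; rewrite scaler0 addr0. Qed.

Lemma pair_unit N : centrally_s_unital (lS N) ->
  forall z a, lS N z -> lS N a -> exists w, [/\ lS N w, central_in_S w,
     (forall x, z (w x) = z x) & (forall x, a (w x) = a x)].
Proof.
move=> [_ Hu] z a Lz La.
have [z1 [[e1 k1] [_ c1] u1]] := Hu z Lz.
have [z2 [[e2 k2] [_ c2] u2]] := Hu a La.
have ew : endo (fun x => z1 x + z2 x - z1 (z2 x)).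
  by apply: endo_add; [apply: endo_add | apply: endo_opp; apply: endo_comp].
exists (fun x => z1 x + z2 x - z1 (z2 x)); split.
- split => // x Nx; by rewrite k1 // k2 // (endo0 e1) oppr0 !addr0.
- split => // f ef x; by rewrite (endoB ef) (endoD ef) !(c1 f ef) !(c2 f ef).
- move=> x; have [ez _] := Lz.
  by rewrite (endoB ez) (endoD ez) u1 u1 addrK.
- move=> x; have [ea _] := La.
  by rewrite (endoB ea) (endoD ea) u2 -c1 // u2 addrAC subrr add0r.
Qed.

Lemma global_unit N : centrally_s_unital (lS N) -> finite_uniform_dimension M ->
  exists c, [/\ lS N c, central_in_S c & forall a, lS N a -> forall x, a (c x) = a x].
Proof.
move=> hsu FUD; apply: NNPP => nG.
have step : forall z, lS N z -> central_in_S z -> exists z', [/\ lS N z', central_in_S z',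
     (forall x, z (z' x) = z x) & exists x, z x = 0 /\ z' x <> 0].
  move=> z Lz cz.
  have [z'' [Lz'' cz'' uz'']] := hsu.2 z Lz.
  have [a [x0 [La ne]]] : exists a x0, lS N a /\ a (z'' x0) <> a x0.
    apply: NNPP => H; apply: nG; exists z''; split => // a La x.
    by apply: NNPP => ne; apply: H; exists a, x.
  have [w [Lw cw uz ua]] := pair_unit hsu Lz La.
  have [ez _] := Lz; have [ea _] := La; have [ez'' _] := Lz''.
  exists w; split => //; exists (x0 - z'' x0); split.
    by rewrite endoB // uz'' subrr.
  move=> w0; apply: ne; apply/eqP; rewrite eq_sym -subr_eq0 -endoB // -ua w0.
  by rewrite endo0.
have : forall z, exists z', lS N z /\ central_in_S z -> [/\ lS N z', central_in_S z',
     (forall x, z (z' x) = z x) & exists x, z x = 0 /\ z' x <> 0].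
  move=> z; case: (classic (lS N z /\ central_in_S z)) => [[Lz cz]|nz].
    by have [z' h] := step z Lz cz; exists z'.
  by exists z => h.
case/functional_choice => F hF.
have [z0 [Lz0 cz0 _]] := hsu.2 _ (lS_zero N).
pose zs k := iter k F z0.
have Lzs : forall k, lS N (zs k) /\ central_in_S (zs k).
  elim=> [|k [Lk ck]] //=; by have [? ? _ _] := hF _ (conj Lk ck).
have ezs : forall k, endo (zs k) by move=> k; have [[]] := Lzs k.
have P1 : forall k x, zs k (zs k.+1 x) = zs k x.
  by move=> k x; have [_ _ h _] := hF _ (Lzs k); exact: h.
have Wx : forall k, exists x, zs k x = 0 /\ zs k.+1 x <> 0.
  by move=> k; have [_ _ _ h] := hF _ (Lzs k); exact: h.
have P2 : forall j k x, (j < k)%N -> zs j (zs k x) = zs j x.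
  move=> j k; elim: k => [//|k IH] x; rewrite ltnS leq_eqVlt => /orP [/eqP ->|jk].
    exact: P1.
  by rewrite -(IH (zs k.+1 x)) // P1 IH.
have cen : forall j x, central_in_S (zs j) -> forall k, zs k (zs j x) = zs j (zs k x).
  by move=> j x [_ c] k; apply: c.
pose W l (w : M) := zs (2 * l) w = 0 /\ exists u, w = zs (2 * l).+1 u.
have Wlow : forall l w j, W l w -> (j <= 2 * l)%N -> zs j w = 0.
  move=> l w j [h0 _]; rewrite leq_eqVlt => /orP [/eqP ->//|jl].
  by rewrite -(P2 _ _ w jl) h0 endo0.
have Whigh : forall l w j, W l w -> ((2 * l).+1 < j)%N -> zs j w = w.
  move=> l w j [_ [u ->]] jl; rewrite cen; last exact: (Lzs _).2.
  by rewrite P2.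
pose q l x := zs (2 * l).+2 x - zs (2 * l) x.
have qW : forall l l' w, W l' w -> q l w = if l' == l then w else 0.
  move=> l l' w Ww; rewrite /q; case: eqP => [<-|/eqP ne].
    by rewrite (Whigh l') // (Wlow l' w) // subr0.
  case: (ltngtP l' l) ne => [lt _|gt _|eq]; last by [].
    by rewrite (Whigh l') ?(Whigh l' w (2 * l)) ?subrr //; lia.
  by rewrite (Wlow l') ?(Wlow l' w (2 * l)) ?subrr //; lia.
have [E [[subE essE] [n [U [hU [hds1 hds2]]]]]] := FUD.
pose U' : nat -> M -> Prop := fun k =>
  if (insub k : option 'I_n) is Some i then U i else (fun _ => False).
have U'_val : forall i : 'I_n, U' i = U i by move=> i; rewrite /U' valK.
have sumconv : forall G : nat -> M, \sum_(i < n) G i = \sum_(l <- iota 0 n) G l.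
  move=> G; have -> : iota 0 n = index_iota 0 n by rewrite /index_iota subn0.
  by rewrite big_mkord.
have subW : forall l, submodule (W l).
  move=> l; have e0 := ezs (2 * l); have e1 := ezs (2 * l).+1; split.
  - by split; [exact: endo0 | exists 0; rewrite endo0].
  - move=> x y [x0 [u ex]] [y0 [v ey]]; split.
      by rewrite (endoD e0) x0 y0 addr0.
    by exists (u + v); rewrite (endoD e1) ex ey.
  - move=> c x [x0 [u ex]]; split; first by rewrite (endoZ e0) x0 scaler0.
    by exists (c *: u); rewrite (endoZ e1) ex.
pose V l w := W l w /\ E w.
suff : (n.+1 <= n)%N by rewrite ltnn.
rewrite -{1}(size_iota 0 n.+1) -{2}(size_iota 0 n).
apply: (@UD U' (iota 0 n) _ _ _ V (iota 0 n.+1)).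
- exact: iota_uniq.
- move=> k; rewrite mem_iota add0n => /andP [_ kn].
  have e : U' k = U (Ordinal kn) := U'_val (Ordinal kn).
  by rewrite e.
- move=> xs h1 h0 l; rewrite mem_iota add0n => /andP [_ ln].
  apply: (hds2 (fun i : 'I_n => xs i) _ _ (Ordinal ln)).
    by move=> i; rewrite -U'_val; apply: h1; rewrite mem_iota add0n leq0n ltn_ord.
  by rewrite sumconv.
- exact: iota_uniq.
- move=> l _; have [a1 a2 a3] := subW l; have [b1 b2 b3] := subE.
  split; first by split.
    by move=> ? ? [? ?] [? ?]; split; auto.
  by move=> ? ? [? ?]; split; auto.
- move=> l _.
  have nzW : nonzero_sub (W l).
    have [x [hx nx]] := Wx (2 * l); exists (zs (2 * l).+1 x); split => //.
    by split; [rewrite P1 | exists x].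
  have [x [x1 x2 x3]] := essE (W l) (subW l) nzW.
  by exists x; split.
- move=> ys h1 h0 l ls.
  have e : q l (\sum_(k <- iota 0 n.+1) ys k) = ys l.
    have -> : q l (\sum_(k <- iota 0 n.+1) ys k) = \sum_(k <- iota 0 n.+1) q l (ys k).
      by rewrite /q !(endo_sum (ezs _)) sumrB.
    rewrite (eq_big_seq (fun k => if k == l then ys l else 0)).
      by rewrite sum_single // iota_uniq.
    move=> k ks; rewrite (qW l k _ (h1 k ks).1); by case: eqP => [->|].
  by rewrite -e h0 /q !(endo0 (ezs _)) subr0.
- move=> l _ x [_ Ex]; have [xs [hx ->]] := (hds1 x).1 Ex.
  pose ys k := if (insub k : option 'I_n) is Some i then xs i else 0.
  have ysv : forall i : 'I_n, ys i = xs i by move=> i; rewrite /ys valK.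
  exists ys; split => //.
    move=> k; rewrite mem_iota add0n => /andP [_ kn].
    have e : U' k = U (Ordinal kn) := U'_val (Ordinal kn).
    have e2 : ys k = xs (Ordinal kn) := ysv (Ordinal kn).
    by rewrite e e2.
  by rewrite -sumconv; apply: eq_bigr => i _; rewrite ysv.
Qed.

End Helpers.

Theorem corollary3p7 (R : pzRingType) (M : lmodType R^c) :
  centrally_endo_AIP M -> semi_projective M -> retractable M ->
  finite_uniform_dimension M -> quasi_Baer_End M.
Proof.
move=> AIP _ _ FUD I [_ [Iendo I0 Iadd Il Ir]].
pose N := fun x : M => forall f, I f -> f x = 0.
have fiN : fully_invariant N.
  split.
    split.
    - by move=> f If; rewrite (endo0 (Iendo f If)).
    - by move=> x y Nx Ny f If; rewrite (endoD (Iendo f If)) Nx ?Ny ?addr0.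
    - by move=> a x Nx f If; rewrite (endoZ (Iendo f If)) Nx ?scaler0.
  by move=> g eg x Nx f If; exact: (Nx _ (Ir f g If eg)).
have [c [[ec kc] [_ cc] uc]] := global_unit (AIP N fiN) FUD.
have ILN : forall f, I f -> lS N f.
  by move=> f If; split; [apply: Iendo | move=> x Nx; apply: Nx].
have cc2 : forall x, c (c x) = c x by move=> x; apply: uc.
exists (fun x => x - c x); split.
- by apply: endo_add => //; apply: endo_opp.
- by move=> x; rewrite (endoB ec) cc2 subrr subr0.
- move=> g eg; split.
  + move=> H; exists g; split => // x; rewrite kc ?subr0 //.
    by move=> f If; exact: H f If x.
  + move=> [s [es eg']] f If x; rewrite eg' (endoB (Iendo f If)) uc ?subrr //.
    exact: ILN.
Qed.
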